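(* Let $r>0$ and let $z\colon[0,r)\to[0,r)$ be a homeomorphism with $(\alpha)z>\alpha$ for all $\alpha\in(0,r)$. Let $f$ be a permutation of $[0,r)$ such that $f$ commutes with $z$, $f$ is right-continuous at $0$, and $f$ has only finitely many points of discontinuity. Then $f$ is continuous (for the usual topology).
   Context: Maps act on the right: $(\alpha)z$ denotes the image of $\alpha$ under $z$, and $(\alpha)(fz)=((\alpha)f)z$. *)

(* Defs.v *)
From Stdlib Require Import Reals List.
Open Scope R_scope.

Definition Ico0 (r x : R) : Prop := 0 <= x < r.

Definition maps_into (D : R -> Prop) (f : R -> R) : Prop :=
  forall x, D x -> D (f x).

Definition cont_at_in (D : R -> Prop) (f : R -> R) (x : R) : Prop :=
  forall eps, 0 < eps -> exists delta, 0 < delta /\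
    forall y, D y -> Rabs (y - x) < delta -> Rabs (f y - f x) < eps.

Definition cont_on (D : R -> Prop) (f : R -> R) : Prop :=
  forall x, D x -> cont_at_in D f x.

Definition homeo_on (D : R -> Prop) (f : R -> R) : Prop :=
  maps_into D f /\ cont_on D f /\
  exists g : R -> R, maps_into D g /\ cont_on D g /\
    (forall x, D x -> g (f x) = x) /\ (forall y, D y -> f (g y) = y).

Definition perm_on (D : R -> Prop) (f : R -> R) : Prop :=
  maps_into D f /\
  (forall x y, D x -> D y -> f x = f y -> x = y) /\
  (forall y, D y -> exists x, D x /\ f x = y).

Definition right_cont_at_in (D : R -> Prop) (f : R -> R) (a : R) : Prop :=
  forall eps, 0 < eps -> exists delta, 0 < delta /\
    forall y, D y -> a <= y < a + delta -> Rabs (f y - f a) < eps.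

Definition finitely_many_discont (D : R -> Prop) (f : R -> R) : Prop :=
  exists l : list R, forall x, D x -> ~ cont_at_in D f x -> In x l.

(* Main.v *)
Require Import Defs.
From Stdlib Require Import Reals List Lra Lia FinFun.
Open Scope R_scope.

Lemma comp_cont (D : R -> Prop) (h k : R -> R) (x : R) :
  maps_into D k -> D x -> cont_at_in D k x -> cont_at_in D h (k x) ->
  cont_at_in D (fun y => h (k y)) x.
Proof.
  intros Hm Dx Hk Hh eps He.
  destruct (Hh eps He) as [d1 [Hd1 H1]].
  destruct (Hk d1 Hd1) as [d2 [Hd2 H2]].
  exists d2; split; auto.
Qed.

Lemma ext_cont (D : R -> Prop) (f F : R -> R) (x : R) :
  (forall y, D y -> f y = F y) -> D x -> cont_at_in D F x -> cont_at_in D f x.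
Proof.
  intros He Dx H eps Heps.
  destruct (H eps Heps) as [d [Hd H1]].
  exists d; split; auto.
  intros y Dy Hy. rewrite (He y Dy), (He x Dx). auto.
Qed.

Lemma no_inj_in_list (s : nat -> R) (l : list R) :
  (forall m n, s m = s n -> m = n) -> (forall n, In (s n) l) -> False.
Proof.
  intros Hi Hl.
  assert (ND : NoDup (map s (seq 0 (S (length l))))).
  { apply Injective_map_NoDup; [exact Hi | apply seq_NoDup]. }
  assert (Inc : incl (map s (seq 0 (S (length l)))) l).
  { intros a Ha. apply in_map_iff in Ha. destruct Ha as [n [<- _]]. apply Hl. }
  pose proof (NoDup_incl_length ND Inc) as Hlen.
  rewrite length_map, length_seq in Hlen. lia.
Qed.

Theorem lemma3p1 (r : R) (z f : R -> R)
  (hr : 0 < r)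
  (hz : homeo_on (Ico0 r) z)
  (hzgt : forall a, 0 < a < r -> z a > a)
  (hf : perm_on (Ico0 r) f)
  (hcomm : forall a, Ico0 r a -> f (z a) = z (f a))
  (hf0 : right_cont_at_in (Ico0 r) f 0)
  (hfin : finitely_many_discont (Ico0 r) f) :
  cont_on (Ico0 r) f.
Proof.
  destruct hz as [zm [zc [g [gm [gc [gz zg]]]]]].
  destruct hf as [fm _].
  destruct hfin as [l Hl].
  assert (Key : forall x, Ico0 r x -> cont_at_in (Ico0 r) f (g x) ->
                 cont_at_in (Ico0 r) f x).
  { intros x Dx Hc.
    apply (ext_cont _ f (fun y => z (f (g y)))); auto.
    - intros y Dy. rewrite <- hcomm by auto. rewrite zg; auto.
    - apply (comp_cont _ (fun w => z (f w)) g); auto.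
      apply (comp_cont _ z f); auto. }
  assert (Hz0 : forall w, Ico0 r w -> z w = 0 -> w = 0).
  { intros w Dw H. destruct (Req_dec w 0); auto.
    assert (0 < w < r) by (unfold Ico0 in Dw; lra).
    specialize (hzgt w H1). lra. }
  assert (Hg : forall x, 0 < x < r -> 0 < g x < x).
  { intros x Hx. assert (Dx : Ico0 r x) by (unfold Ico0; lra).
    pose proof (gm x Dx) as Dg. pose proof (zg x Dx) as E.
    destruct (Req_dec (g x) 0) as [E0|E0].
    - assert (z 0 = 0).
      { destruct (Req_dec (z 0) 0); auto.
        pose proof (zm 0 ltac:(unfold Ico0; lra)) as D0. unfold Ico0 in D0.
        pose proof (gm 0 ltac:(unfold Ico0; lra)) as Dg0.
        pose proof (zg 0 ltac:(unfold Ico0; lra)) as E1.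
        pose proof (Hz0 _ Dg0 E1) as E2. rewrite E2 in E1. lra. }
      rewrite E0 in E. lra.
    - unfold Ico0 in Dg. assert (0 < g x < r) by lra.
      specialize (hzgt _ H). lra. }
  intros x Dx. destruct (Req_dec x 0) as [E|E].
  - subst x. intros eps He. destruct (hf0 eps He) as [d [Hd H]].
    exists d; split; auto. intros y Dy Hy. apply H; auto.
    unfold Ico0 in Dy. rewrite Rminus_0_r, Rabs_right in Hy by lra. lra.
  - apply Classical_Prop.NNPP. intro Hnc.
    assert (Hx : 0 < x < r) by (unfold Ico0 in Dx; lra).
    set (s := fun n => Nat.iter n g x).
    assert (Hs : forall n, 0 < s n < r /\ ~ cont_at_in (Ico0 r) f (s n)).
    { induction n as [|n IH]; simpl.
      - split; auto.
      - destruct IH as [H1 H2]. change (s (S n)) with (g (s n)).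
        pose proof (Hg _ H1). split; [lra|].
        intro C. apply H2. apply Key; auto. unfold Ico0; lra. }
    assert (Hdec : forall n, s (S n) < s n).
    { intro n. change (s (S n)) with (g (s n)). apply Hg, Hs. }
    assert (Hlt : forall m k, s (S k + m)%nat < s m).
    { intros m k. induction k as [|k IH].
      - apply Hdec.
      - replace (S (S k) + m)%nat with (S (S k + m)) by lia.
        specialize (Hdec (S k + m)%nat). lra. }
    apply (no_inj_in_list s l).
    + intros m n Heq. destruct (Nat.lt_total m n) as [H|[H|H]]; auto.
      * replace n with (S (n - m - 1) + m)%nat in Heq by lia.
        specialize (Hlt m (n-m-1)%nat). lra.
      * replace m with (S (m - n - 1) + n)%nat in Heq by lia.
        specialize (Hlt n (m-n-1)%nat). lra.
    + intro n. destruct (Hs n) as [H1 H2]. apply Hl; auto. unfold Ico0; lra.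
Qed.
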